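(* A connected graph $G$ contains none of $P_5$, $C_4$, $C_5$, the claw, the bull as an induced subgraph if and only if $G$ is a co-chain graph.
   Context: All graphs are finite and simple. A graph $G$ is a co-chain graph if its vertex set can be partitioned into two cliques $X$ and $Y$ such that the vertices of $X$ can be ordered $x_1,\dots,x_{|X|}$ with $N[x_i]\subseteq N[x_j]$ for all $1\le i<j\le |X|$ (closed neighborhoods). $P_n$, $C_n$ denote the path and cycle on $n$ vertices; the claw is $K_{1,3}$; the bull is the $5$-vertex graph consisting of a triangle with two pendant edges attached at two distinct triangle vertices. *)

(* Defs.v *)
From mathcomp Require Import all_boot.
Set Implicit Arguments. Unset Strict Implicit. Unset Printing Implicit Defensive.

Definition simple_graph (T : finType) (e : rel T) : Prop :=
  symmetric e /\ irreflexive e.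

Definition connected (T : finType) (e : rel T) : Prop :=
  forall x y : T, connect e x y.

Definition graph_of (n : nat) (E : seq (nat * nat)) : rel 'I_n :=
  fun i j => ((val i, val j) \in E) || ((val j, val i) \in E).
Arguments graph_of : clear implicits.

Definition P5 : rel 'I_5 := graph_of 5 [:: (0,1); (1,2); (2,3); (3,4)].
Definition C4 : rel 'I_4 := graph_of 4 [:: (0,1); (1,2); (2,3); (3,0)].
Definition C5 : rel 'I_5 := graph_of 5 [:: (0,1); (1,2); (2,3); (3,4); (4,0)].
Definition claw : rel 'I_4 := graph_of 4 [:: (0,1); (0,2); (0,3)].
Definition bull : rel 'I_5 := graph_of 5 [:: (0,1); (1,2); (2,0); (0,3); (1,4)].

Definition induced_sub (n : nat) (H : rel 'I_n) (T : finType) (e : rel T) : Prop :=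
  exists f : 'I_n -> T, injective f /\ forall i j, e (f i) (f j) = H i j.

Definition closed_nbhd (T : finType) (e : rel T) (x : T) : {set T} :=
  [set y | (y == x) || e x y].

Definition is_clique (T : finType) (e : rel T) (A : {set T}) : Prop :=
  forall x y, x \in A -> y \in A -> x != y -> e x y.

Definition co_chain (T : finType) (e : rel T) : Prop :=
  exists (X Y : {set T}) (s : seq T),
    [/\ X :|: Y = setT, [disjoint X & Y], is_clique e X & is_clique e Y] /\
    [/\ uniq s, X = [set x in s] &
        forall (x0 : T) (i j : nat), i < j -> j < size s ->
          closed_nbhd e (nth x0 s i) \subset closed_nbhd e (nth x0 s j)].

(* Main.v *)
Require Import Defs.
From mathcomp Require Import all_boot.
Set Implicit Arguments. Unset Strict Implicit. Unset Printing Implicit Defensive.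

Ltac neq_tac irr :=
  first [ done | by rewrite eq_sym |
  apply/eqP => E; subst;
  solve [ match goal with H1 : is_true (?e ?x ?y), H2 : ?e ?x ?y = false |- _ => by rewrite H1 in H2 end
        | match goal with H1 : ?e ?x ?y = true, H2 : ?e ?x ?y = false |- _ => by rewrite H1 in H2 end
        | match goal with H : is_true (?e ?x ?x) |- _ => by rewrite irr in H end
        | match goal with H : ?e ?x ?x = true |- _ => by rewrite irr in H end
        | match goal with H : is_true (?x != ?x) |- _ => by rewrite eqxx in H end ] ].

Ltac ord_cases i := case: i => [[|[|[|[|[|i]]]]] ?] //.

Ltac symm_all sym :=
  repeat match goal with
  | H : is_true (?e ?x ?y) |- _ =>
      lazymatch goal with
      | _ : is_true (e y x) |- _ => fail
      | _ : e y x = true |- _ => fail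
      | _ => have := H; rewrite sym => ?
      end
  | H : ?e ?x ?y = true |- _ =>
      lazymatch goal with
      | _ : is_true (e y x) |- _ => fail
      | _ : e y x = true |- _ => fail
      | _ => have := H; rewrite sym => ?
      end
  | H : ?e ?x ?y = false |- _ =>
      lazymatch goal with
      | _ : e y x = false |- _ => fail
      | _ => have := H; rewrite sym => ?
      end
  end.

Lemma mkP5 (T : finType) (e : rel T) : irreflexive e -> symmetric e ->
  forall a b c d w : T, e a b -> e b c -> e c d -> e d w ->
  e a c = false -> e a d = false -> e a w = false -> e b d = false -> e b w = false -> e c w = false ->
  induced_sub P5 e.
Proof.
move=> irr sym a b c d w *; symm_all sym.
exists (fun i : 'I_5 => nth a [:: a; b; c; d; w] i); split.
- move=> i j; apply: contra_eq; ord_cases i; ord_cases j => _ /=; neq_tac irr.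
- move=> i j; ord_cases i; ord_cases j; rewrite /= ?irr //.
Qed.

Lemma mkC5 (T : finType) (e : rel T) : irreflexive e -> symmetric e ->
  forall a b c d w : T, e a b -> e b c -> e c d -> e d w -> e w a ->
  e a c = false -> e a d = false -> e b d = false -> e b w = false -> e c w = false ->
  induced_sub C5 e.
Proof.
move=> irr sym a b c d w *; symm_all sym.
exists (fun i : 'I_5 => nth a [:: a; b; c; d; w] i); split.
- move=> i j; apply: contra_eq; ord_cases i; ord_cases j => _ /=; neq_tac irr.
- move=> i j; ord_cases i; ord_cases j; rewrite /= ?irr //.
Qed.

Lemma mkC4 (T : finType) (e : rel T) : irreflexive e -> symmetric e ->
  forall a b c d : T, e a b -> e b c -> e c d -> e d a ->
  e a c = false -> e b d = false -> a != c -> b != d ->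
  induced_sub C4 e.
Proof.
move=> irr sym a b c d *; symm_all sym.
exists (fun i : 'I_4 => nth a [:: a; b; c; d] i); split.
- move=> i j; apply: contra_eq; ord_cases i; ord_cases j => _ /=; neq_tac irr.
- move=> i j; ord_cases i; ord_cases j; rewrite /= ?irr //.
Qed.

Lemma mkclaw (T : finType) (e : rel T) : irreflexive e -> symmetric e ->
  forall c a b d : T, e c a -> e c b -> e c d ->
  e a b = false -> e a d = false -> e b d = false -> a != b -> a != d -> b != d ->
  induced_sub claw e.
Proof.
move=> irr sym c a b d *; symm_all sym.
exists (fun i : 'I_4 => nth a [:: c; a; b; d] i); split.
- move=> i j; apply: contra_eq; ord_cases i; ord_cases j => _ /=; neq_tac irr.
- move=> i j; ord_cases i; ord_cases j; rewrite /= ?irr //.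
Qed.

Lemma mkbull (T : finType) (e : rel T) : irreflexive e -> symmetric e ->
  forall t0 t1 t2 p3 p4 : T, e t0 t1 -> e t1 t2 -> e t2 t0 -> e t0 p3 -> e t1 p4 ->
  e t0 p4 = false -> e t1 p3 = false -> e t2 p3 = false -> e t2 p4 = false -> e p3 p4 = false ->
  induced_sub bull e.
Proof.
move=> irr sym a b c d w *; symm_all sym.
exists (fun i : 'I_5 => nth a [:: a; b; c; d; w] i); split.
- move=> i j; apply: contra_eq; ord_cases i; ord_cases j => _ /=; neq_tac irr.
- move=> i j; ord_cases i; ord_cases j; rewrite /= ?irr //.
Qed.

Definition Hn (E : seq (nat*nat)) (i j : nat) := ((i, j) \in E) || ((j, i) \in E).
Definition csubn E n (i j : nat) := all (fun k => ((k == i) || Hn E i k) ==> ((k == j) || Hn E j k)) (iota 0 n).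
Definition cok1 E n (b : nat -> bool) :=
  all (fun i => all (fun j => ((i != j) && (b i == b j)) ==> (Hn E i j)) (iota 0 n)) (iota 0 n).
Definition cok2 E n (b : nat -> bool) :=
  all (fun i => all (fun j => (b i && b j) ==> (csubn E n i j || csubn E n j i)) (iota 0 n)) (iota 0 n).

Lemma all_ord n (P : pred nat) : (forall i : 'I_n, P i) -> all P (iota 0 n).
Proof. move=> H; apply/allP => k; rewrite mem_iota add0n => /andP[_ kn]; exact: (H (Ordinal kn)). Qed.

Lemma cochain_cmp (T : finType) (e : rel T) X Y s :
  [/\ X :|: Y = setT, [disjoint X & Y], is_clique e X & is_clique e Y] /\
    [/\ uniq s, X = [set x in s] &
        forall (x0 : T) (i j : nat), i < j -> j < size s ->
          closed_nbhd e (nth x0 s i) \subset closed_nbhd e (nth x0 s j)] ->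
  forall x y, x \in X -> y \in X ->
    (closed_nbhd e x \subset closed_nbhd e y) || (closed_nbhd e y \subset closed_nbhd e x).
Proof.
move=> [_ [_ -> Hs]] x y; rewrite !inE => xs ys.
have Ex := nth_index x xs; have Ey := nth_index x ys.
have ix : index x s < size s by rewrite index_mem.
have iy : index y s < size s by rewrite index_mem.
case: (ltngtP (index x s) (index y s)) => H.
- by apply/orP; left; rewrite -Ex -Ey; apply: Hs.
- by apply/orP; right; rewrite -Ex -Ey; apply: Hs.
- by rewrite -Ex -Ey H subxx.
Qed.

Lemma cochain_no (T : finType) (e : rel T) n E :
  co_chain e -> induced_sub (graph_of n E) e ->
  exists b, cok1 E n b && cok2 E n b.
Proof.
move=> [X [Y [s CC]]] [f [finj fe]].
have cmp := cochain_cmp CC.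
case: CC => [[cov dis cX cY] _].
have inY : forall x, x \notin X -> x \in Y.
  move=> x xX; have : x \in X :|: Y by rewrite cov in_setT.
  by rewrite in_setU (negbTE xX).
have XY : forall x, x \in X -> x \in Y -> False.
  by move=> x xX xY; move/pred0P: dis => /(_ x); rewrite /= xX xY.
exists (fun k => [exists i : 'I_n, (val i == k) && (f i \in X)]).
have bE : forall i : 'I_n, [exists i0 : 'I_n, (val i0 == val i) && (f i0 \in X)] = (f i \in X).
  move=> i; apply/existsP/idP => [[i0 /andP[/eqP/val_inj -> //]]|H]; by exists i; rewrite eqxx.
have finjE : forall i j, (f i == f j) = (i == j).
  by move=> i j; apply/eqP/eqP => [/finj|->].
apply/andP; split; apply: all_ord => i; apply: all_ord => j; rewrite !bE.
- apply/implyP => /andP[ij bij].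
  have fij : f i != f j by rewrite finjE.
  rewrite /Hn -/(graph_of n E i j) -fe.
  case: (boolP (f i \in X)) bij => fi; case: (boolP (f j \in X)) => fj //= _.
  + exact: cX.
  + exact: cY (inY _ fi) (inY _ fj) fij.
- apply/implyP => /andP[fi fj].
  have sub : forall i j : 'I_n, closed_nbhd e (f i) \subset closed_nbhd e (f j) -> csubn E n i j.
    move=> i0 j0 /subsetP S; apply: all_ord => k; apply/implyP.
    rewrite /Hn -/(graph_of n E i0 k) -/(graph_of n E j0 k) -!fe.
    have := S (f k); rewrite !inE !finjE.
    by move=> H /H.
  by case/orP: (cmp _ _ fi fj) => /sub ->; rewrite ?orbT.
Qed.

Lemma chk_P5 b : ~~ (cok1 [:: (0,1); (1,2); (2,3); (3,4)] 5 b && cok2 [:: (0,1); (1,2); (2,3); (3,4)] 5 b).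
Proof. rewrite /cok1 /cok2 /=. by case: (b 0); case: (b 1); case: (b 2); case: (b 3); case: (b 4); vm_compute. Qed.
Lemma chk_C5 b : ~~ (cok1 [:: (0,1); (1,2); (2,3); (3,4); (4,0)] 5 b && cok2 [:: (0,1); (1,2); (2,3); (3,4); (4,0)] 5 b).
Proof. rewrite /cok1 /cok2 /=. by case: (b 0); case: (b 1); case: (b 2); case: (b 3); case: (b 4); vm_compute. Qed.
Lemma chk_bull b : ~~ (cok1 [:: (0,1); (1,2); (2,0); (0,3); (1,4)] 5 b && cok2 [:: (0,1); (1,2); (2,0); (0,3); (1,4)] 5 b).
Proof. rewrite /cok1 /cok2 /=. by case: (b 0); case: (b 1); case: (b 2); case: (b 3); case: (b 4); vm_compute. Qed.
Lemma chk_C4 b : ~~ (cok1 [:: (0,1); (1,2); (2,3); (3,0)] 4 b && cok2 [:: (0,1); (1,2); (2,3); (3,0)] 4 b).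
Proof. rewrite /cok1 /cok2 /=. by case: (b 0); case: (b 1); case: (b 2); case: (b 3); vm_compute. Qed.
Lemma chk_claw b : ~~ (cok1 [:: (0,1); (0,2); (0,3)] 4 b && cok2 [:: (0,1); (0,2); (0,3)] 4 b).
Proof. rewrite /cok1 /cok2 /=. by case: (b 0); case: (b 1); case: (b 2); case: (b 3); vm_compute. Qed.

Lemma backward (T : finType) (e : rel T) : co_chain e ->
  (~ induced_sub P5 e /\ ~ induced_sub C4 e /\ ~ induced_sub C5 e /\
    ~ induced_sub claw e /\ ~ induced_sub bull e).
Proof.
move=> CC; split; [|split; [|split; [|split]]] => /(cochain_no CC) [b].
- by rewrite (negbTE (chk_P5 b)).
- by rewrite (negbTE (chk_C4 b)).
- by rewrite (negbTE (chk_C5 b)).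
- by rewrite (negbTE (chk_claw b)).
- by rewrite (negbTE (chk_bull b)).
Qed.

Lemma cut_edge (T : finType) (e : rel T) (S : pred T) x y :
  x \in S -> y \notin S -> connect e x y -> exists p q, [/\ p \in S, q \notin S & e p q].
Proof.
move=> xS yS /connectP [s]; elim: s x xS => [|z s IH] x xS /=.
  by move=> _ E; rewrite E xS in yS.
move=> /andP[exz pth] ly.
case: (boolP (z \in S)) => zS; first exact: IH zS pth ly.
by exists x, z.
Qed.

Definition far (T : finType) (e : rel T) v a := [forall x, ~~ (e v x && e x a)].

Lemma far_sym (T : finType) (e : rel T) : symmetric e -> forall a b, far e a b = far e b a.
Proof.
move=> sym a b; apply/forallP/forallP => H x; have := H x; by rewrite andbC sym [e x _]sym.
Qed.


Lemma lemA (T : finType) (e : rel T) : irreflexive e -> symmetric e ->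
  ~ induced_sub P5 e -> ~ induced_sub claw e -> ~ induced_sub bull e ->
  forall v a b, v != a -> v != b -> a != b -> e v a = false -> e v b = false -> e a b = false ->
  ~~ far e v a -> ~~ far e v b -> False.
Proof.
move=> irr sym nP5 nclaw nbull v a b va vb ab eva evb eab.
move/forallPn => [x]; rewrite negbK => /andP[vx xa].
move/forallPn => [x']; rewrite negbK => /andP[vx' x'b].
symm_all sym.
case Exb: (e x b).
  by apply: nclaw; apply: (mkclaw irr sym (c:=x) (a:=v) (b:=a) (d:=b)).
case Ex'a: (e x' a).
  by apply: nclaw; apply: (mkclaw irr sym (c:=x') (a:=v) (b:=a) (d:=b)).
symm_all sym.
case Exx': (e x x').
  by apply: nbull; apply: (mkbull irr sym (t0:=x) (t1:=x') (t2:=v) (p3:=a) (p4:=b)).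
symm_all sym.
by apply: nP5; apply: (mkP5 irr sym (a:=a) (b:=x) (c:=v) (d:=x') (w:=b)).
Qed.

Lemma layer (T : finType) (e : rel T) : irreflexive e -> symmetric e -> connected e ->
  ~ induced_sub P5 e ->
  forall v a, a != v -> e v a = false -> far e v a ->
  exists x z, [/\ e v x, e x z, e z a & e v z = false].
Proof.
move=> irr sym con nP5 v a av eva fva.
pose L2 z := (z != v) && ~~ e v z && [exists x, e v x && e x z].
pose S := [pred w | (w == v) || e v w || L2 w || [exists z, L2 z && e z w]].
case: (boolP [exists z, L2 z && e z a]) => [/existsP [z /andP[/andP[/andP[zv vz] /existsP[x /andP[vx xz]]] za]] | Hn].
  by exists x, z; split => //; apply/negbTE.
have aS : a \notin S.
  rewrite inE (negbTE av) eva (negbTE Hn) /= orbF /L2 av eva /=.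
  apply/negP => /existsP [x Hx]; by move/forallP: fva => /(_ x); rewrite Hx.
have vS : v \in S by rewrite inE eqxx.
have [p [q [pS qS pq]]] := cut_edge vS aS (con v a).
move: qS; rewrite inE !negb_or => /andP[/andP[/andP[qv vq] L2q] Hq].
move: pS; rewrite inE.
case: (boolP (p == v)) => [/eqP pv|pv] /=.
  by subst p; rewrite pq in vq.
case: (boolP (e v p)) => vp /=.
  move=> _; case/negP: L2q; rewrite /L2 qv vq /=; apply/existsP; exists p; by rewrite vp pq.
case: (boolP (L2 p)) => L2p /=.
  by move=> _; case/negP: Hq; apply/existsP; exists p; rewrite L2p pq.
move=> /existsP [z /andP[L2z zp]].
move: (L2z); rewrite /L2 => /andP[/andP[zv vz] /existsP [x /andP[vx xz]]].
have xp : e x p = false.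
  apply/negbTE; apply: contra L2p => xp; rewrite /L2 pv vp /=; apply/existsP; exists x; by rewrite vx.
have xq : e x q = false.
  apply/negbTE; apply: contra L2q => xq; rewrite /L2 qv vq /=; apply/existsP; exists x; by rewrite vx.
have zq : e z q = false.
  apply/negbTE; apply: contra Hq => zq; apply/existsP; exists z; by rewrite L2z.
move/negbTE: vz => vz; move/negbTE: vp => vp; move/negbTE: vq => vq.
by case: nP5; apply: (mkP5 irr sym (a:=v) (b:=x) (c:=z) (d:=p) (w:=q)).
Qed.

Lemma lemB (T : finType) (e : rel T) : irreflexive e -> symmetric e -> connected e ->
  ~ induced_sub P5 e -> ~ induced_sub claw e -> ~ induced_sub bull e ->
  forall v a b, v != a -> v != b -> a != b -> e v a = false -> e v b = false -> e a b = false ->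
  far e v a -> far e v b -> False.
Proof.
move=> irr sym con nP5 nclaw nbull v a b va vb ab eva evb eab fa fb.
have [xa [za [vxa xza zaa vza]]] := layer irr sym con nP5 (a:=a) (v:=v) (ltac:(by rewrite eq_sym)) eva fa.
have [xb [zb [vxb xzb zbb vzb]]] := layer irr sym con nP5 (a:=b) (v:=v) (ltac:(by rewrite eq_sym)) evb fb.
have F1 : forall x y, far e v y -> e v x -> e x y = false.
  by move=> x y /forallP /(_ x) H vx; apply/negbTE; rewrite vx in H.
have xaa := F1 _ _ fa vxa. have xba := F1 _ _ fa vxb.
have xab := F1 _ _ fb vxa. have xbb := F1 _ _ fb vxb.
symm_all sym.
case Ezab: (e za b).
  symm_all sym; by apply: nclaw; apply: (mkclaw irr sym (c:=za) (a:=xa) (b:=a) (d:=b)) => //; neq_tac irr.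
case Ezba: (e zb a).
  symm_all sym; by apply: nclaw; apply: (mkclaw irr sym (c:=zb) (a:=xb) (b:=b) (d:=a)) => //; try neq_tac irr; rewrite sym.
symm_all sym.
case Ezz: (e za zb).
  case Exz: (e xa zb).
    symm_all sym; by apply: nbull; apply: (mkbull irr sym (t0:=za) (t1:=zb) (t2:=xa) (p3:=a) (p4:=b)) => //.
  symm_all sym.
  symm_all sym; by apply: nclaw; apply: (mkclaw irr sym (c:=za) (a:=xa) (b:=a) (d:=zb)) => //; neq_tac irr.
symm_all sym.
case Exz: (e xa zb).
  symm_all sym; by apply: nclaw; apply: (mkclaw irr sym (c:=xa) (a:=v) (b:=za) (d:=zb)) => //; neq_tac irr.
case Exz': (e xb za).
  symm_all sym; by apply: nclaw; apply: (mkclaw irr sym (c:=xb) (a:=v) (b:=zb) (d:=za)) => //; neq_tac irr.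
symm_all sym.
case Exx: (e xa xb).
  symm_all sym; by apply: nP5; apply: (mkP5 irr sym (a:=a) (b:=za) (c:=xa) (d:=xb) (w:=zb)).
symm_all sym.
symm_all sym; by apply: nP5; apply: (mkP5 irr sym (a:=a) (b:=za) (c:=xa) (d:=v) (w:=xb)).
Qed.

Lemma alpha2 (T : finType) (e : rel T) : irreflexive e -> symmetric e -> connected e ->
  ~ induced_sub P5 e -> ~ induced_sub claw e -> ~ induced_sub bull e ->
  forall a b c, a != b -> a != c -> b != c -> e a b = false -> e a c = false -> e b c = false -> False.
Proof.
move=> irr sym con nP5 nclaw nbull.
have K : forall v p q, v != p -> v != q -> p != q -> e v p = false -> e v q = false -> e p q = false ->
    far e v p != far e v q.
  move=> v p q vp vq pq evp evq epq.
  case Fp: (far e v p); case Fq: (far e v q) => //.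
  - by case: (lemB irr sym con nP5 nclaw nbull vp vq pq evp evq epq Fp Fq).
  - by case: (lemA irr sym nP5 nclaw nbull vp vq pq evp evq epq); rewrite ?Fp ?Fq.
move=> a b c ab ac bc eab eac ebc.
have ba : b != a by rewrite eq_sym.
have ca : c != a by rewrite eq_sym.
have cb : c != b by rewrite eq_sym.
have eba : e b a = false by rewrite sym.
have eca : e c a = false by rewrite sym.
have ecb : e c b = false by rewrite sym.
have K1 := K _ _ _ ab ac bc eab eac ebc.
have K2 := K _ _ _ ba bc ac eba ebc eac.
have K3 := K _ _ _ ca cb ab eca ecb eab.
rewrite !(far_sym sym c) (far_sym sym b a) in K2 K3.
by move: K1 K2 K3; case: (far e a b); case: (far e a c); case: (far e b c).
Qed.

Lemma forward (T : finType) (e : rel T) : simple_graph e -> connected e ->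
  (~ induced_sub P5 e /\ ~ induced_sub C4 e /\ ~ induced_sub C5 e /\
    ~ induced_sub claw e /\ ~ induced_sub bull e) -> co_chain e.
Proof.
move=> [sym irr] con [nP5 [nC4 [nC5 [nclaw nbull]]]].
have al := alpha2 irr sym con nP5 nclaw nbull.
case: (pickP (@predT T)) => [u0 _ | T0].
  pose N x := closed_nbhd e x.
  have NE : forall x y, (y \in N x) = (y == x) || e x y by move=> x y; rewrite inE.
  case: (arg_minnP (fun x => #|N x|) (isT : predT u0)) => u _ umin.
  pose X := N u. pose Y := ~: X.
  have uX : u \in X by rewrite NE eqxx.
  have YE : forall y, y \in Y -> (y != u) /\ e u y = false.
    move=> y; rewrite inE NE negb_or => /andP[yu /negbTE ->]; by [].
  have cY : is_clique e Y.
    move=> y1 y2 y1Y y2Y y12; apply/negPn/negP => /negbTE E.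
    have [y1u uy1] := YE _ y1Y. have [y2u uy2] := YE _ y2Y.
    by apply: (al u y1 y2) => //; rewrite eq_sym.
  have small : forall x x', e u x -> e u x' -> x != x' -> e x x' = false ->
      [forall y in Y, ~~ e x y] -> False.
    move=> x x' ux ux' xx' exx' /forallP P.
    have : N x \proper N u.
      apply/properP; split.
      - apply/subsetP => z; rewrite !NE => /orP[/eqP ->|xz]; first by rewrite ux orbT.
        case: (boolP (z \in Y)) => zY; first by move: (P z); rewrite zY xz.
        by move: zY; rewrite in_setC negbK NE.
      - exists x'; first by rewrite NE ux' orbT.
        by rewrite NE exx' orbF eq_sym.
    by move/proper_card; rewrite ltnNge (umin x).
  have cX : is_clique e X.
    move=> x1 x2; rewrite !NE => H1 H2 x12.
    case/orP: H1 => [/eqP E1|ux1].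
      subst x1; case/orP: H2 => [/eqP E|//]; by rewrite E eqxx in x12.
    case/orP: H2 => [/eqP ->|ux2]; first by rewrite sym.
    apply/negPn/negP => /negbTE E12.
    have x21 : x2 != x1 by rewrite eq_sym.
    have E21 : e x2 x1 = false by rewrite sym.
    have Cy : forall xa xb, e u xa -> e u xb -> xa != xb -> e xa xb = false ->
        forall y, y \in Y -> e xa y -> e xb y = false.
      move=> xa xb uxa uxb xab exab y yY xay; apply/negbTE/negP => xby.
      have [yu uy] := YE _ yY.
      have uy' : u != y by rewrite eq_sym.
      apply: nC4; apply: (mkC4 irr sym (a:=u) (b:=xa) (c:=y) (d:=xb)) => //; by rewrite sym.
    case: (boolP [forall y in Y, ~~ e x1 y]) => P1; first exact: small ux1 ux2 x12 E12 P1.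
    case: (boolP [forall y in Y, ~~ e x2 y]) => P2; first exact: small ux2 ux1 x21 E21 P2.
    move/forallPn: P1 => [y1]; rewrite negb_imply negbK => /andP[y1Y x1y1].
    move/forallPn: P2 => [y2]; rewrite negb_imply negbK => /andP[y2Y x2y2].
    have x2y1 := Cy _ _ ux1 ux2 x12 E12 _ y1Y x1y1.
    have x1y2 := Cy _ _ ux2 ux1 x21 E21 _ y2Y x2y2.
    have y12 : y1 != y2 by apply/eqP => E; subst; rewrite x1y1 in x1y2.
    have y1y2 := cY _ _ y1Y y2Y y12.
    have [_ uy1] := YE _ y1Y. have [_ uy2] := YE _ y2Y.
    symm_all sym.
    by apply: nC5; apply: (mkC5 irr sym (a:=u) (b:=x1) (c:=y1) (d:=y2) (w:=x2)).
  have cmp : forall x x', x \in X -> x' \in X -> (N x \subset N x') || (N x' \subset N x).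
    move=> x x' xX x'X; case: (eqVneq x x') => [->|xx']; first by rewrite subxx.
    have exx' := cX _ _ xX x'X xx'.
    apply/negPn/negP; rewrite negb_or => /andP[/subsetPn [p px px'] /subsetPn [q qx' qx]].
    move: px px' qx' qx; rewrite !NE !negb_or => px /andP[px' ex'p] qx' /andP[qx exq].
    case/orP: px => [/eqP Ep|xp]; first by subst; rewrite sym exx' in ex'p.
    case/orP: qx' => [/eqP Eq|x'q]; first by subst; rewrite exx' in exq.
    have pY : p \in Y.
      rewrite in_setC; apply/negP => pX; move: (cX _ _ pX x'X px'); by rewrite sym (negbTE ex'p).
    have qY : q \in Y.
      rewrite in_setC; apply/negP => qX; move: (cX _ _ qX xX qx); by rewrite sym (negbTE exq).
    have pq : p != q by apply/eqP => E; subst; rewrite xp in exq.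
    have epq := cY _ _ pY qY pq.
    move/negbTE: ex'p => ex'p; move/negbTE: exq => exq.
    have xq : x != q by rewrite eq_sym.
    symm_all sym.
    by apply: nC4; apply: (mkC4 irr sym (a:=x) (b:=p) (c:=q) (d:=x')).
  pose leT := fun a b => #|N a| <= #|N b|.
  have leT_tr : transitive leT by move=> ? ? ?; apply: leq_trans.
  exists X, Y, (sort leT (enum X)); split; split => //.
  - by rewrite setUCr.
  - by rewrite disjoints_subset setCK subxx.
  - by rewrite sort_uniq enum_uniq.
  - by apply/setP => x; rewrite inE mem_sort mem_enum.
  - move=> x0 i j ij js.
    have srt : sorted leT (sort leT (enum X)) by apply: sort_sorted => a b; apply: leq_total.
    have Hle : leT (nth x0 (sort leT (enum X)) i) (nth x0 (sort leT (enum X)) j).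
      by apply: (sorted_ltn_nth leT_tr x0 srt) => //; rewrite inE //; apply: ltn_trans ij js.
    have mX : forall k, k < size (sort leT (enum X)) -> nth x0 (sort leT (enum X)) k \in X.
      by move=> k ks; have := mem_nth x0 ks; rewrite mem_sort mem_enum.
    have := cmp _ _ (mX _ (ltn_trans ij js)) (mX _ js).
    case/orP => // H.
    have : N (nth x0 (sort leT (enum X)) j) == N (nth x0 (sort leT (enum X)) i) by rewrite eqEcard H /=; exact: Hle.
    move/eqP => E; change (N (nth x0 (sort leT (enum X)) i) \subset N (nth x0 (sort leT (enum X)) j)); by rewrite E subxx.
exists set0, set0, [::]; split; split => //.
- by apply/setP => x; have := T0 x.
- by apply/pred0P => x; have := T0 x.
- by move=> x; rewrite inE.
- by move=> x; rewrite inE.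
Qed.

Theorem theorem16 (T : finType) (e : rel T) :
  simple_graph e -> connected e ->
  ((~ induced_sub P5 e /\ ~ induced_sub C4 e /\ ~ induced_sub C5 e /\
    ~ induced_sub claw e /\ ~ induced_sub bull e) <-> co_chain e).
Proof.
move=> sg con; split; [exact: forward | exact: backward].
Qed.
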